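(* There cannot be two finalized checkpoints on different (conflicting) chains. That is, if checkpoints $C$ and $C'$ are both finalized, then the block of one is an ancestor of (or equal to) the block of the other.
   Context: System: $n$ validators, each with equal stake, of which $f<n/3$ are Byzantine; the validator set is fixed between finalized checkpoints. Blocks form a tree rooted at the genesis block, and a chain is a path from the genesis block. A checkpoint is a pair $(b,e)$, where $b$ is the block of the first slot of epoch $e$ on the chain. A checkpoint vote is a signed pair, source $(a,e_a)$ and target $(b,e_b)$, with $e_a<e_b$. A supermajority link $(a,e_a)\to(b,e_b)$ exists when more than $2/3$ of the validators cast that checkpoint vote. A checkpoint is justified if it is the target of a supermajority link; the genesis checkpoint is justified. A checkpoint $(a,e_a)$ is finalized if: - it is justified; - there is a supermajority link $(a,e_a)\to(b,e_b)$ with $e_b-e_a\le 2$; - if $e_b-e_a=2$, the checkpoint at epoch $e_a+1$ on that chain is justified. Honest validators follow these rules: - each casts at most one checkpoint vote per epoch; - the source is the justified checkpoint with the highest epoch in its view; - the target is the current epoch's checkpoint on the candidate chain, selected by a fork choice rule that only follows chains extending the block of that highest justified checkpoint. *)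

(* Defs.v *)
(* Model of Casper FFG / Gasper checkpoint finality. *)
From mathcomp Require Import all_boot.
Set Implicit Arguments.
Unset Strict Implicit.
Unset Printing Implicit Defensive.

Record blocktree := BlockTree {
  Block :> Type;
  genesis : Block;
  parent : Block -> Block;
  slot : Block -> nat;
  parent_genesis : parent genesis = genesis;
  slot_genesis : slot genesis = 0;
  slot_parent : forall b, b <> genesis -> slot (parent b) < slot b;
  rooted : forall b, exists k, iter k parent b = genesis
}.

Section Model.
Variable T : blocktree.
Variable spe : nat. (* slots per epoch; first slot of epoch e is e * spe *)

Definition ancestor (a b : T) : Prop := exists k, iter k (@parent T) b = a.

(* [b] is the block of the first slot of epoch [e] on the chain ending at [h]:
   the latest block of that chain whose slot is <= e * spe. *)
Definition checkpoint_block (h : T) (e : nat) (b : T) : Prop :=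
  [/\ ancestor b h, slot b <= e * spe &
      forall c, ancestor c h -> slot c <= e * spe -> ancestor c b].

Definition checkpoint := (Block T * nat)%type.

Record vote := Vote { src : checkpoint; tgt : checkpoint }.

Variable V : finType. (* validators, equal stake *)

Definition sm_link (votes : V -> vote -> Prop) (s t : checkpoint) : Prop :=
  s.2 < t.2 /\
  exists S : {set V}, 2 * #|V| < 3 * #|S| /\
    forall v, v \in S -> votes v (Vote s t).

Inductive justified (votes : V -> vote -> Prop) : checkpoint -> Prop :=
| justified_genesis : justified votes (genesis T, 0)
| justified_link s t :
    justified votes s -> sm_link votes s t -> justified votes t.

Definition finalized (votes : V -> vote -> Prop) (c : checkpoint) : Prop :=
  justified votes c /\
  exists b eb, sm_link votes c (b, eb) /\ eb - c.2 <= 2 /\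
    (eb - c.2 = 2 ->
       exists m, checkpoint_block b c.2.+1 m /\ justified votes (m, c.2.+1)).

(* [cast v x]: validator v cast vote x.
   [view v e w x]: in the view of validator v when voting in epoch e,
   validator w has cast vote x. *)
Definition honest (cast : V -> vote -> Prop)
    (view : V -> nat -> V -> vote -> Prop) (v : V) : Prop :=
  [/\ (* views only contain votes really cast (signatures) *)
      (forall e w x, view v e w x -> cast w x),
      (forall e1 e2 w x, e1 <= e2 -> view v e1 w x -> view v e2 w x),
      (forall x y, cast v x -> cast v y -> (tgt x).2 = (tgt y).2 -> x = y) &
      (* each vote, cast in epoch e := target epoch, follows the rules *)
      (forall x, cast v x ->
         let e := (tgt x).2 in
         [/\ (src x).2 < e,
             justified (view v e) (src x),
             (forall c, justified (view v e) c -> c.2 <= (src x).2) &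
             exists h, ancestor (src x).1 h /\
                       checkpoint_block h e (tgt x).1])].

End Model.

(* Main.v *)
Require Import Defs.
From mathcomp Require Import all_boot.
From mathcomp Require Import zify.
Set Implicit Arguments.
Unset Strict Implicit.

Lemma anc_refl (T : blocktree) (a : T) : ancestor a a.
Proof. by exists 0. Qed.

Lemma anc_trans (T : blocktree) (a b c : T) :
  ancestor a b -> ancestor b c -> ancestor a c.
Proof.
move=> [k Hk] [j Hj]; exists (k + j); by rewrite iterD Hj.
Qed.

Lemma honest_inter (V : finType) (byz S1 S2 : {set V}) :
  3 * #|byz| < #|V| -> 2 * #|V| < 3 * #|S1| -> 2 * #|V| < 3 * #|S2| ->
  exists v, [/\ v \in S1, v \in S2 & v \notin byz].
Proof.
move=> Hb H1 H2.
case: (boolP [exists v, [&& v \in S1, v \in S2 & v \notin byz]]).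
  by move/existsP=> [v /and3P [a b c]]; exists v.
move=> Hn; exfalso.
have Hsub : S1 :&: S2 \subset byz.
  apply/subsetP=> v; rewrite inE => /andP [a b].
  case: (boolP (v \in byz)) => // c.
  by move: Hn; rewrite negb_exists => /forallP /(_ v); rewrite a b c.
have := subset_leq_card Hsub.
have := cardsUI S1 S2.
have := subset_leq_card (subsetT (S1 :|: S2)); rewrite cardsT.
lia.
Qed.

Lemma justified_mono (T : blocktree) (V : finType)
  (v1 v2 : V -> vote T -> Prop) t :
  (forall w x, v1 w x -> v2 w x) -> justified v1 t -> justified v2 t.
Proof.
move=> Hs; elim=> [|s t' _ IH [Hlt [S [HS HSv]]]]; first exact: justified_genesis.
apply: justified_link IH _; split=> //; exists S; split=> // w Hw; exact/Hs/HSv.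
Qed.

Lemma unique_just (T : blocktree) (spe : nat) (V : finType)
    (byz : {set V}) (cast : V -> vote T -> Prop)
    (view : V -> nat -> V -> vote T -> Prop) t t' :
  3 * #|byz| < #|V| ->
  (forall v, v \notin byz -> honest spe cast view v) ->
  justified cast t -> justified cast t' -> t.2 = t'.2 -> t = t'.
Proof.
move=> Hb Hh J J'.
case: J => [|s t0 _ [Hlt [S [HS HSv]]]];
case: J' => [|s' t1 _ [Hlt' [S' [HS' HSv']]]] //= He; try lia.
have [v [v1 v2 v3]] := honest_inter Hb HS HS'.
case: (Hh v v3) => _ _ Hone _.
have := Hone _ _ (HSv v v1) (HSv' v v2) He.
by case.
Qed.

Lemma just_slot (T : blocktree) (spe : nat) (V : finType)
    (byz : {set V}) (cast : V -> vote T -> Prop)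
    (view : V -> nat -> V -> vote T -> Prop) t :
  3 * #|byz| < #|V| ->
  (forall v, v \notin byz -> honest spe cast view v) ->
  justified cast t -> slot t.1 <= t.2 * spe.
Proof.
move=> Hb Hh J; case: J => [|s t0 _ [Hlt [S [HS HSv]]]].
  by rewrite /= slot_genesis.
have [v [v1 _ v3]] := honest_inter Hb HS HS.
case: (Hh v v3) => _ _ _ Hr.
by case: (Hr _ (HSv v v1)) => _ _ _ [h [_ [_ ?]]].
Qed.

Lemma final_desc (T : blocktree) (spe : nat) (V : finType)
    (byz : {set V}) (cast : V -> vote T -> Prop)
    (view : V -> nat -> V -> vote T -> Prop) (c : checkpoint T) :
  3 * #|byz| < #|V| ->
  (forall v, v \notin byz -> honest spe cast view v) ->
  finalized spe cast c ->
  forall t, justified cast t -> c.2 <= t.2 -> ancestor c.1 t.1.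
Proof.
move=> Hb Hh [Jc [b [eb [Hl [Hd Hm]]]]].
have Jb : justified cast (b, eb) by apply: justified_link Jc Hl.
have Sa := just_slot Hb Hh Jc.
case: Hl => Hlt [S [HS HSv]]; rewrite /= in Hlt Hd Hm.
have Hab : ancestor c.1 b.
  have [v [v1 _ v3]] := honest_inter Hb HS HS.
  case: (Hh v v3) => _ _ _ Hr.
  case: (Hr _ (HSv v v1)) => /= _ _ _ [h [Hah [_ _ Hcb]]].
  apply: Hcb Hah _; rewrite /=; apply: (leq_trans Sa); rewrite leq_mul2r; lia.
move=> t Jt; move: {2}t.2 (leqnn t.2) => n; elim: n t Jt => [|n IH] t Jt Htn Het.
  have -> : t = c by apply: (unique_just Hb Hh Jt Jc); lia.
  exact: anc_refl.
case: (ltngtP t.2 eb) => Heb.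
- case: (ltngtP t.2 c.2) => Hec; first lia; last first.
    have -> : t = c by apply: (unique_just Hb Hh Jt Jc).
    exact: anc_refl.
  have [m [[Hmb _ Hmp] Jm]] : exists m, checkpoint_block spe b c.2.+1 m /\
      justified cast (m, c.2.+1) by apply: Hm; lia.
  have -> : t = (m, c.2.+1) by apply: (unique_just Hb Hh Jt Jm) => /=; lia.
  apply: Hmp Hab _; apply: (leq_trans Sa); rewrite leq_mul2r; lia.
- case: Jt Htn Het Heb => [|s t0 Js [Hlt' [S' [HS' HSv']]]] Htn Het Heb.
    by rewrite /= in Heb; lia.
  have [v [v1 v2 v3]] := honest_inter Hb HS HS'.
  case: (Hh v v3) => Hview Hgrow _ Hr.
  case: (Hr _ (HSv v v1)) => /= _ Jcv _ _.
  case: (Hr _ (HSv' v v2)) => /= _ _ Hmax [h [Hsh [_ _ Htp]]].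
  have Jcv' : justified (view v t0.2) c.
    apply: justified_mono Jcv => w x; apply: Hgrow; lia.
  have Hcs := Hmax _ Jcv'.
  have Has : ancestor c.1 s.1 by apply: IH Js _ Hcs; lia.
  apply: Htp (anc_trans Has Hsh) _; apply: (leq_trans Sa); rewrite leq_mul2r; lia.
- have -> : t = (b, eb) by apply: (unique_just Hb Hh Jt Jb).
  exact: Hab.
Qed.

Theorem mainTheorem4 (T : blocktree) (spe : nat) (V : finType)
    (byz : {set V}) (cast : V -> vote T -> Prop)
    (view : V -> nat -> V -> vote T -> Prop)
    (c c' : checkpoint T) :
  0 < spe ->
  3 * #|byz| < #|V| ->
  (forall v, v \notin byz -> honest spe cast view v) ->
  finalized spe cast c -> finalized spe cast c' ->
  ancestor c.1 c'.1 \/ ancestor c'.1 c.1.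
Proof.
move=> _ Hb Hh Fc Fc'.
case: (leqP c.2 c'.2) => H.
  left; apply: (final_desc Hb Hh Fc) => //; exact: Fc'.1.
right; apply: (final_desc Hb Hh Fc'); [exact: Fc.1 | lia].
Qed.
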